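(* A finite group $G$ is $2'$-simple if and only if it has a subnormal series $1=I_0\trianglelefteq I_1\trianglelefteq\cdots\trianglelefteq I_t=G$ in which every quotient $I_{j+1}/I_j$ is generated by elements of order $2$.
   Context: A finite group $G$ is called $2'$-simple if it has no proper normal subgroup of odd index (equivalently, no nontrivial quotient of odd order). A subnormal series is a chain of subgroups each normal in the next. *)

(* Defs.v *)
From mathcomp Require Import all_boot all_fingroup.
Set Implicit Arguments. Unset Strict Implicit. Unset Printing Implicit Defensive.
Local Open Scope group_scope.

Definition two'_simple (gT : finGroupType) (G : {group gT}) : Prop :=
  forall H : {group gT}, H <| G -> odd #|G : H| -> H :=: G.

Definition involutions (gT : finGroupType) (A : {set gT}) : {set gT} :=
  [set x in A | #[x] == 2%N].

Definition inv_gen_subnormal_series (gT : finGroupType) (G : {group gT})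
    (t : nat) (I : nat -> {group gT}) : Prop :=
  [/\ I 0%N :=: 1, I t :=: G &
      forall j, (j < t)%N ->
        I j <| I j.+1 /\
        (I j.+1 / I j)%g = << involutions (I j.+1 / I j) >>].

(* Main.v *)
Require Import Defs.
From mathcomp Require Import all_boot all_fingroup all_solvable.
From mathcomp Require Import zify.
Set Implicit Arguments. Unset Strict Implicit. Unset Printing Implicit Defensive.
Local Open Scope group_scope.

Lemma sq_in (gT : finGroupType) (H K : {group gT}) x :
  x \in K -> K \subset 'N(H) -> odd #|K / H| -> x ^+ 2 \in H -> x \in H.
Proof.
move=> Kx nHK oddQ x2H.
have Nx : x \in 'N(H) by apply: (subsetP nHK).
apply: coset_idr => //.
set y := coset H x.
have y2 : y ^+ 2 = 1 by rewrite /y -morphX //; apply: coset_id.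
have d2 : #[y] %| 2 by rewrite order_dvdn y2.
have dQ : #[y] %| #|K / H| by apply: order_dvdG; apply: mem_quotient.
apply/eqP; rewrite -order_eq1.
move: (dvdn_leq (isT : 0 < 2) d2) (order_gt0 y) dQ.
case: #[y] => [|[|[|]]] //= _ _.
by rewrite dvdn2 oddQ.
Qed.

Fixpoint ser (gT : finGroupType) (G : {group gT}) (n : nat) : {group gT} :=
  if n is m.+1 then <<[set x in G | x ^+ 2 \in ser G m]>>%G else 1%G.

Lemma ser_normal (gT : finGroupType) (G : {group gT}) n : ser G n <| G.
Proof.
elim: n => [|n IH] /=; first exact: normal1.
have [sHG nHG] := andP IH.
apply/andP; split.
  by rewrite gen_subG; apply/subsetP => x; rewrite inE => /andP[].
apply: norms_gen; apply/subsetP => y Gy; rewrite inE; apply/subsetP => z.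
rewrite mem_conjg !inE => /andP[Gz z2].
have -> : z = (z ^ y^-1) ^ y by rewrite conjgKV.
rewrite groupJ //= -conjXg memJ_norm //; apply: (subsetP nHG) => //.
Qed.

Lemma ser_sub (gT : finGroupType) (G : {group gT}) n : ser G n \subset ser G n.+1.
Proof.
have [sHG _] := andP (ser_normal G n).
apply/subsetP => x Hx /=; apply: mem_gen; rewrite inE (subsetP sHG) //=.
by rewrite groupX.
Qed.

Lemma ser_quo (gT : finGroupType) (G : {group gT}) j :
  (ser G j.+1 / ser G j) = << [set x in ser G j.+1 / ser G j | #[x] == 2] >>.
Proof.
set H := ser G j.
have [sHG nHG] := andP (ser_normal G j).
set S := [set x in G | x ^+ 2 \in H].
have sSG : S \subset G by apply/subsetP => x; rewrite inE => /andP[].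
have nHS : S \subset 'N(H) := subset_trans sSG nHG.
apply/eqP; rewrite eqEsubset; apply/andP; split; last first.
  by rewrite gen_subG; apply/subsetP => y; rewrite inE => /andP[].
have -> : (ser G j.+1 / H) = <<S>> / H by [].
rewrite (quotient_gen nHS) gen_subG.
apply/subsetP => y /morphimP[x Nx Sx ey]; have -> : y = coset H x by [].
case: (eqVneq (coset H x) 1) => [->|ne]; first exact: group1.
apply: mem_gen; rewrite inE -quotient_gen // mem_quotient ?mem_gen //=.
have d2 : #[coset H x] %| 2.
  rewrite order_dvdn -morphX //; apply/eqP; apply: coset_id.
  by move: Sx; rewrite inE => /andP[].
move: (dvdn_leq (isT : 0 < 2) d2) (order_gt0 (coset H x)).
rewrite -order_eq1 in ne; move: ne.
by case: #[coset H x] => [|[|[|]]].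
Qed.

Lemma ser_stab (gT : finGroupType) (G : {group gT}) :
  exists2 t, t < #|G| & ser G t :=: ser G t.+1.
Proof.
case: (boolP [exists j : 'I_#|G|, ser G j == ser G j.+1 :> {set gT}]).
  by case/existsP => j /eqP e; exists j.
rewrite negb_exists => /forallP P.
have key : forall n, n <= #|G| -> n < #|ser G n|.
  elim => [|n IH] le; first by rewrite cards1.
  apply: leq_ltn_trans (IH (ltnW le)) _.
  apply: proper_card; rewrite properEneq ser_sub andbT.
  exact: (P (Ordinal le)).
have := key _ (leqnn _).
have [sG _] := andP (ser_normal G #|G|).
by rewrite ltnNge subset_leq_card.
Qed.

Lemma ser_below (gT : finGroupType) (G : {group gT}) t (I : nat -> {group gT}) :
  I t :=: G -> (forall j, j < t -> I j <| I j.+1) ->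
  forall k, k <= t -> I (t - k) \subset G.
Proof.
move=> It nI; elim => [|k IH] le; first by rewrite subn0 It.
apply: subset_trans (IH (ltnW le)).
have lt : t - k.+1 < t by lia.
have [s _] := andP (nI _ lt).
by have -> : t - k = (t - k.+1).+1 by lia.
Qed.

Theorem mainTheorem15 (gT : finGroupType) (G : {group gT}) :
  two'_simple G <->
  exists (t : nat) (I : nat -> {group gT}), inv_gen_subnormal_series G t I.
Proof.
split.
- move=> s2.
  have [t _ et] := ser_stab G.
  have [sKG nKG] := andP (ser_normal G t).
  have KG : ser G t :=: G.
    apply: s2; first exact: ser_normal.
    rewrite -card_quotient //; apply/negP => /negP ev.
    have ev2 : 2 %| #|G / ser G t| by rewrite dvdn2.
    have [y Qy oy] := Cauchy (isT : prime 2) ev2.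
    case/morphimP: Qy => x Nx Gx ey.
    have ey' : y = coset (ser G t) x by [].
    have x2 : x ^+ 2 \in ser G t.
      apply: coset_idr; first by rewrite groupX.
      by rewrite morphX // -ey -oy expg_order.
    have xK : x \in ser G t.
      rewrite et /=; apply: mem_gen; by rewrite inE Gx.
    by move: oy; rewrite ey' coset_id // order1.
  exists t, (ser G); split => //.
  move=> j _; split; last exact: ser_quo.
  apply: normalS (ser_sub G j) _ (ser_normal G j).
  by have [] := andP (ser_normal G j.+1).
- case=> t [I [I0 It nI]] H nHG oddI.
  have [sHG nHG'] := andP nHG.
  have nI' : forall j, j < t -> I j <| I j.+1 by move=> j /nI[].
  have below : forall j, j <= t -> I j \subset G.
    move=> j le; have := ser_below It nI' (leq_subr j t).
    by rewrite subKn.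
  have oddQ : odd #|G / H| by rewrite card_quotient.
  have key : forall j, j <= t -> I j \subset H.
    elim => [|j IH] le; first by rewrite I0 sub1G.
    have lt : j < t := le.
    have [nIj Qe] := nI j lt.
    have [sIj nIIj] := andP nIj.
    have sIH := IH (ltnW le).
    rewrite -(quotientSGK nIIj sIH) Qe gen_subG.
    apply/subsetP => y; rewrite inE => /andP[/morphimP[x Nx Ix ey] oy].
    have ey' : y = coset (I j) x by [].
    rewrite ey' mem_quotient //.
    apply: (sq_in (K := G)) => //.
    - exact: (subsetP (below _ le)).
    - apply: (subsetP sIH); apply: coset_idr; first by rewrite groupX.
      by rewrite morphX // -ey -(eqP oy) expg_order.
  by apply/eqP; rewrite eqEsubset sHG -It key.
Qed.
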